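(* Let $x_0\in\mathbb{R}$ with $x_0\neq1$, let $\alpha>1$ and let \[ 0<T^*<\frac{\alpha-1}{\alpha(1+\alpha|x_0|)}. \] Then there exists a solution $x\in C^1([0,T^*])$ of the problem \[ \dot x(t)=x(t)-\max_{s\in[0,t]}x^2(s),\quad t\in[0,T^*],\qquad x(0)=x_0. \] *)

(* Defs.v *)
From Stdlib Require Import Reals.
Open Scope R_scope.

Definition is_max_on (f : R -> R) (a b m : R) : Prop :=
  (exists s, a <= s <= b /\ f s = m) /\
  (forall s, a <= s <= b -> f s <= m).

Definition continuous_within (a b : R) (f : R -> R) (t : R) : Prop :=
  forall eps, 0 < eps -> exists delta, 0 < delta /\
    forall s, a <= s <= b -> Rabs (s - t) < delta -> Rabs (f s - f t) < eps.

Definition has_deriv_within (a b : R) (f : R -> R) (t d : R) : Prop :=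
  forall eps, 0 < eps -> exists delta, 0 < delta /\
    forall h, h <> 0 -> a <= t + h <= b -> Rabs h < delta ->
      Rabs ((f (t + h) - f t) / h - d) < eps.

Definition C1_on_with_deriv (a b : R) (f f' : R -> R) : Prop :=
  (forall t, a <= t <= b -> has_deriv_within a b f t (f' t)) /\
  (forall t, a <= t <= b -> continuous_within a b f' t).

(* Main.v *)
Require Import Defs.
From Stdlib Require Import Reals.
From Stdlib Require Import Lra Psatz.
From Coquelicot Require Import Coquelicot.
Open Scope R_scope.

Lemma hd_of (a b : R) (f : R -> R) (t d : R) :
  is_derive f t d -> has_deriv_within a b f t d.
Proof.
  intros H eps Heps. apply is_derive_Reals in H.
  destruct (H eps Heps) as [delta Hd]. exists delta. split.
  - apply cond_pos.
  - intros h Hh _ Hl. apply Hd; auto.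
Qed.

Lemma cw_of (a b : R) (f : R -> R) (t : R) :
  (forall s, is_derive f s (f s - (f s)^2)) -> False -> continuous_within a b f t.
Proof. intros _ []. Qed.

Lemma cw_of_cont (a b : R) (f : R -> R) (t : R) :
  continuity_pt f t -> continuous_within a b f t.
Proof.
  intros H eps Heps.
  destruct (H eps Heps) as [alp [Halp Hc]]. exists alp. split; auto.
  intros s _ Hs. destruct (Req_dec s t) as [->|Hne].
  - rewrite Rminus_diag, Rabs_R0. exact Heps.
  - apply (Hc s). split.
    + split; [exact I | auto].
    + exact Hs.
Qed.

Lemma cw_of_deriv (f : R -> R) (t d : R) :
  is_derive f t d -> continuity_pt f t.
Proof.
  intros H. apply continuity_pt_filterlim.
  apply (ex_derive_continuous f t). exists d; exact H.
Qed.

Lemma exp_mul_inv s : exp s * exp (- s) = 1.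
Proof. rewrite <- exp_plus, Rplus_opp_r, exp_0. reflexivity. Qed.

Theorem mainTheorem2 (x0 alpha Tstar : R) :
  x0 <> 1 ->
  1 < alpha ->
  0 < Tstar ->
  Tstar < (alpha - 1) / (alpha * (1 + alpha * Rabs x0)) ->
  exists x x' : R -> R,
    C1_on_with_deriv 0 Tstar x x' /\
    x 0 = x0 /\
    forall t, 0 <= t <= Tstar ->
      exists m, is_max_on (fun s => (x s) ^ 2) 0 t m /\ x' t = x t - m.
Proof.
  intros Hx0 Ha HT HTb.
  set (a := Rabs x0).
  assert (Ha0 : 0 <= a) by apply Rabs_pos.
  assert (HTa : Tstar * (1 + a) < 1).
  { assert (HD : 0 < alpha * (1 + alpha * a)) by nra.
    apply (Rmult_lt_compat_r (alpha * (1 + alpha * a))) in HTb; auto.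
    unfold Rdiv in HTb. rewrite Rmult_assoc, Rinv_l in HTb by lra.
    assert (HD3 : 0 <= a * (alpha * (alpha - 1))) by (apply Rmult_le_pos; nra).
    assert (HD2 : (alpha - 1) * (1 + a) <= alpha * (1 + alpha * a)) by nra.
    assert (Tstar * ((alpha - 1) * (1 + a)) < alpha - 1) by nra.
    nra. }
  assert (HexpT : a < (1 + a) * exp (- Tstar)).
  { pose proof (exp_ineq1_le (- Tstar)). nra. }
  assert (Hexps : forall s, 0 <= s <= Tstar -> exp (- Tstar) <= exp (- s)).
  { intros s Hs. destruct (Req_dec s Tstar) as [->|Hne]; [lra|].
    left; apply exp_increasing; lra. }
  destruct (Rlt_or_le x0 1) as [Hlt|Hge].
  - (* logistic solution *)
    set (g := fun t => (1 - x0) * exp (- t) + x0).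
    set (x := fun t => x0 / g t).
    assert (Hg : forall s, 0 <= s <= Tstar -> 0 < g s).
    { intros s Hs. pose proof (Hexps s Hs). pose proof (exp_pos (- Tstar)).
      unfold g. unfold a in *.
      destruct (Rle_or_lt 0 x0).
      - nra.
      - rewrite Rabs_left in HexpT by lra. nra. }
    assert (Hgm : forall s t, 0 <= s <= t -> t <= Tstar -> g t <= g s).
    { intros s t Hs Ht. unfold g.
      assert (exp (- t) <= exp (- s)).
      { destruct (Req_dec s t) as [->|Hne]; [lra|].
        left; apply exp_increasing; lra. }
      nra. }
    assert (Hd : forall t, 0 <= t <= Tstar -> is_derive x t (x t - (x t)^2)).
    { intros t Ht. pose proof (Hg t Ht) as Hgt. unfold x, g in *.
      auto_derive.
      - lra.
      - field. lra. }
    exists x, (fun t => x t - (x t)^2). split; [split|split].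
    + intros t Ht. apply hd_of, Hd, Ht.
    + intros t Ht. apply cw_of_cont.
      apply continuity_pt_minus.
      * exact (cw_of_deriv _ _ _ (Hd t Ht)).
      * apply (continuity_pt_comp x (fun y => y ^ 2)).
        -- exact (cw_of_deriv _ _ _ (Hd t Ht)).
        -- apply derivable_continuous_pt, derivable_pt_pow.
    + unfold x, g. rewrite Ropp_0, exp_0. replace ((1 - x0) * 1 + x0) with 1 by ring. unfold Rdiv. rewrite Rinv_1. ring.
    + intros t Ht. exists ((x t)^2). split; [split|reflexivity].
      * exists t. split; [lra|reflexivity].
      * intros s Hs. pose proof (Hg t Ht) as Hgt.
        pose proof (Hgm s t Hs ltac:(lra)) as Hgs.
        pose proof (Rinv_le_contravar _ _ Hgt Hgs).
        pose proof (Rinv_0_lt_compat _ Hgt).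
        unfold x, Rdiv. rewrite !Rpow_mult_distr. apply Rmult_le_compat_l; [apply pow2_ge_0|]. apply pow_incr. split; [left; apply Rinv_0_lt_compat; apply Hg; lra | assumption].
  - assert (H1 : 1 < x0) by lra.
    unfold a in *. rewrite Rabs_right in HexpT by lra.
    set (x := fun t => x0^2 + (x0 - x0^2) * exp t).
    assert (Hd : forall t, is_derive x t (x t - x0^2)).
    { intros t. unfold x. auto_derive; [exact I|ring]. }
    exists x, (fun t => x t - x0^2). split; [split|split].
    + intros t Ht. apply hd_of, Hd.
    + intros t Ht. apply cw_of_cont.
      apply continuity_pt_minus.
      * exact (cw_of_deriv _ _ _ (Hd t)).
      * apply continuity_pt_const. intros u v; reflexivity.
    + unfold x. rewrite exp_0. ring.
    + intros t Ht. exists (x0^2). split; [split|reflexivity].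
      * exists 0. split; [lra|]. unfold x. rewrite exp_0. ring.
      * intros s Hs. assert (Hs' : 0 <= s <= Tstar) by lra.
        pose proof (Hexps s Hs'). pose proof (exp_mul_inv s).
        pose proof (exp_pos s). pose proof (exp_pos (- s)).
        assert (1 <= exp s).
        { destruct (Req_dec s 0) as [->|Hne]; [rewrite exp_0; lra|].
          left. rewrite <- exp_0. apply exp_increasing. lra. }
        assert (Hlow : (x0 - 1) * exp s <= x0 + 1).
        { assert (HH : 0 <= (x0 + 1) * (exp (- s) - exp (- Tstar))) by (apply Rmult_le_pos; lra).
          assert (HH2 : (x0 - 1) <= (x0 + 1) * exp (- s)) by lra.
          assert (HH3 : 0 <= exp s * ((x0 + 1) * exp (- s) - (x0 - 1))) by (apply Rmult_le_pos; lra).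
          nra. }
        assert (HP1 : 0 <= (x0 ^ 2 - x0) * (exp s - 1)) by (apply Rmult_le_pos; nra).
        assert (HP2 : 0 <= x0 * ((x0 + 1) - (x0 - 1) * exp s)) by (apply Rmult_le_pos; lra).
        assert (Hup : x s <= x0) by (unfold x; nra).
        assert (Hlo : - x0 <= x s) by (unfold x; nra).
        simpl. nra.
Qed.
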